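(* Let $\mathcal{G}$ be a hereditary and multiplicative graph family with $\mathcal{G}_n\ne\emptyset$ for all $n$, let $r\geq 2$ and $0\leq \alpha\leq 1-\frac{1}{r}$. Suppose that $\lambda_{\alpha}(\mathcal{G}_n)>\left(1-\frac{1}{r}\right)n-\left(1-\frac{1}{r}\right)$ for all sufficiently large $n$. Then for every $n\ge1$ and every $G\in \mathcal{G}_n$, $$\lambda_{\alpha}(G)\leq \pi_{\alpha}(\mathcal{G})\,n,$$ where $\pi_\alpha(\mathcal{G})=\lim_{n\to\infty}\lambda_\alpha(\mathcal{G}_n)/n$ (which exists under these hypotheses).
   Context: $\lambda_\alpha(G)$ is the largest eigenvalue of $A_\alpha(G)=\alpha D(G)+(1-\alpha)A(G)$ ($A$ adjacency matrix, $D$ diagonal degree matrix). $\mathcal{G}_n$ is the set of $n$-vertex graphs in $\mathcal{G}$ and $\lambda_\alpha(\mathcal{G}_n)=\max_{G\in\mathcal{G}_n}\lambda_\alpha(G)$. A family is hereditary if closed under taking induced subgraphs. The blow-up $G^p$ of $G$ replaces each vertex by $p$ independent vertices and each edge by a complete bipartite graph $K_{p,p}$; a family $\mathcal{G}$ is multiplicative if $G\in\mathcal{G}$ implies $G^p\in\mathcal{G}$ for all integers $p\ge1$. *)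

(* Defs.v *)
From HB Require Import structures.
From mathcomp Require Import all_boot all_order all_algebra.
From mathcomp Require Import all_classical all_reals all_analysis.
Set Implicit Arguments. Unset Strict Implicit. Unset Printing Implicit Defensive.
Import Order.TTheory GRing.Theory Num.Theory numFieldNormedType.Exports.
Local Open Scope classical_set_scope.
Local Open Scope ring_scope.

Definition simple_graph (n : nat) (e : rel 'I_n) : Prop :=
  irreflexive e /\ symmetric e.

Definition graph_family := forall n : nat, rel 'I_n -> Prop.

Definition inG (F : graph_family) (n : nat) (e : rel 'I_n) : Prop :=
  simple_graph e /\ F n e.

(* hereditary_family: closed under induced subgraphs (any injective relabelling,
   hence also closed under isomorphism) *)
Definition hereditary_family (F : graph_family) : Prop :=
  forall (m n : nat) (f : 'I_m -> 'I_n), injective f ->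
  forall e : rel 'I_n, inG F e -> inG F (fun i j => e (f i) (f j)).

Lemma blow_proj_subproof (n p : nat) (x : 'I_(n * p)) : (x %/ p < n)%N.
Proof.
case: p x => [|p] x; first by case: x => x; rewrite muln0.
by rewrite ltn_divLR // ltn_ord.
Qed.

Definition blow_proj (n p : nat) (x : 'I_(n * p)) : 'I_n :=
  Ordinal (blow_proj_subproof x).

(* the blow-up G^p: each vertex replaced by p independent vertices, each edge
   by a complete bipartite graph K_{p,p} *)
Definition blowup (n : nat) (e : rel 'I_n) (p : nat) : rel 'I_(n * p) :=
  fun x y => e (blow_proj x) (blow_proj y).

Definition multiplicative_family (F : graph_family) : Prop :=
  forall (n p : nat) (e : rel 'I_n), (0 < p)%N -> inG F e ->
  inG F (@blowup n e p).

Definition adj_mx (R : realType) (n : nat) (e : rel 'I_n) : 'M[R]_n :=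
  \matrix_(i, j) (e i j)%:R.

Definition deg_mx (R : realType) (n : nat) (e : rel 'I_n) : 'M[R]_n :=
  diag_mx (\row_i (#|[set j | e i j]|)%:R).

Definition A_alpha (R : realType) (alpha : R) (n : nat) (e : rel 'I_n) : 'M[R]_n :=
  alpha *: deg_mx R e + (1 - alpha) *: adj_mx R e.

Definition lambda_max (R : realType) (n : nat) (M : 'M[R]_n) : R :=
  sup [set a : R | eigenvalue M a].

Definition lam (R : realType) (alpha : R) (n : nat) (e : rel 'I_n) : R :=
  lambda_max (A_alpha alpha e).

Definition lamF (R : realType) (F : graph_family) (alpha : R) (n : nat) : R :=
  sup [set lam alpha e | e in [set e : rel 'I_n | inG F e]].

Definition pi_alpha (R : realType) (F : graph_family) (alpha : R) : R :=
  limn (fun n : nat => lamF F alpha n / n%:R).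

(* Main.v *)
Require Import Defs.
From HB Require Import structures.
From mathcomp Require Import all_boot all_order all_algebra.
From mathcomp Require Import all_classical all_reals all_analysis.
From mathcomp Require Import zify.
Import Order.TTheory GRing.Theory Num.Theory numFieldNormedType.Exports.
Local Open Scope classical_set_scope.
Local Open Scope ring_scope.
Set Implicit Arguments. Unset Strict Implicit.
Section Ray.
Variable R : realType.

Definition bf n (M : 'M[R]_n) (x y : 'rV[R]_n) : R :=
  \sum_i \sum_j x ord0 i * M i j * y ord0 j.
Definition qf n (M : 'M[R]_n) (x : 'rV[R]_n) : R := bf M x x.
Definition nrm n (x : 'rV[R]_n) : R := bf 1%:M x x.

Lemma bfE n (M : 'M[R]_n) x y : bf M x y = \sum_j (x *m M) ord0 j * y ord0 j.
Proof.
rewrite /bf exchange_big /=; apply: eq_bigr => j _.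
by rewrite !mxE mulr_suml.
Qed.

Lemma bf1 n (x y : 'rV[R]_n) : bf 1%:M x y = \sum_j x ord0 j * y ord0 j.
Proof. by rewrite bfE mulmx1. Qed.

Lemma nrmE n (x : 'rV[R]_n) : nrm x = \sum_j x ord0 j * x ord0 j.
Proof. exact: bf1. Qed.

Lemma bfDl n (M : 'M[R]_n) x y z : bf M (x + y) z = bf M x z + bf M y z.
Proof.
rewrite /bf -big_split; apply: eq_bigr => i _; rewrite -big_split.
by apply: eq_bigr => j _; rewrite !mxE !mulrDl.
Qed.

Lemma bfDr n (M : 'M[R]_n) x y z : bf M x (y + z) = bf M x y + bf M x z.
Proof.
rewrite /bf -big_split; apply: eq_bigr => i _; rewrite -big_split.
by apply: eq_bigr => j _; rewrite !mxE !mulrDr.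
Qed.

Lemma bfZl n (M : 'M[R]_n) t x z : bf M (t *: x) z = t * bf M x z.
Proof.
rewrite /bf mulr_sumr; apply: eq_bigr => i _; rewrite mulr_sumr.
by apply: eq_bigr => j _; rewrite !mxE !mulrA.
Qed.

Lemma bfZr n (M : 'M[R]_n) t x z : bf M x (t *: z) = t * bf M x z.
Proof.
rewrite /bf mulr_sumr; apply: eq_bigr => i _; rewrite mulr_sumr.
by apply: eq_bigr => j _; rewrite !mxE mulrCA.
Qed.

Lemma bfC n (M : 'M[R]_n) x y : (forall i j, M i j = M j i) -> bf M x y = bf M y x.
Proof.
move=> sM; rewrite /bf exchange_big /=; apply: eq_bigr => i _.
apply: eq_bigr => j _; by rewrite sM mulrC [x ord0 j * M i j]mulrC mulrA.
Qed.

Lemma qf_expand n (M : 'M[R]_n) x y t : (forall i j, M i j = M j i) ->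
  qf M (x + t *: y) = qf M x + t * (bf M x y + bf M x y) + t ^+ 2 * qf M y.
Proof.
move=> sM; rewrite /qf !bfDl !bfDr !bfZl !bfZr (@bfC _ M y x sM).
by rewrite expr2 -mulrA !mulrDr !addrA.
Qed.

Lemma cont_sum (T : topologicalType) (I : Type) (s : seq I) (P : pred I)
  (f : I -> T -> R) :
  (forall i, continuous (f i)) -> continuous (fun x => \sum_(i <- s | P i) f i x).
Proof.
move=> fc; elim: s => [|a s IH].
  by under eq_fun do rewrite big_nil; exact: cst_continuous.
under eq_fun do rewrite big_cons.
case: (P a).
  by move=> x; apply: continuousD; [exact: fc | exact: IH].
exact: IH.
Qed.

Lemma bf_cont n (M : 'M[R]_n) : continuous (fun x => bf M x x).
Proof.
apply: cont_sum => i; apply: cont_sum => j x.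
apply: (@continuousM _ _ (fun y : 'rV[R]_n => y ord0 i * M i j) (fun y : 'rV[R]_n => y ord0 j)); last exact: coord_continuous.
apply: (@continuousM _ _ (fun y : 'rV[R]_n => y ord0 i) (fun y : 'rV[R]_n => M i j)); first exact: coord_continuous.
exact: cst_continuous.
Qed.

Lemma nrm_ge0 n (x : 'rV[R]_n) : 0 <= nrm x.
Proof. by rewrite nrmE; apply: sumr_ge0 => i _; rewrite -expr2 sqr_ge0. Qed.

Lemma nrm_eq0 n (x : 'rV[R]_n) : nrm x = 0 -> x = 0.
Proof.
rewrite nrmE => /eqP; rewrite psumr_eq0 => [/allP H|i _]; last by rewrite -expr2 sqr_ge0.
apply/rowP => i; rewrite mxE; have := H i (mem_index_enum _).
by rewrite /= mulf_eq0 orbb => /eqP.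
Qed.

Lemma nrm_gt0 n (x : 'rV[R]_n) : x != 0 -> 0 < nrm x.
Proof.
move=> x0; rewrite lt_neqAle nrm_ge0 andbT; apply/negP => /eqP H.
by move/eqP: x0; apply; apply: nrm_eq0.
Qed.

Lemma qfZ n (M : 'M[R]_n) t (x : 'rV[R]_n) : qf M (t *: x) = t ^+ 2 * qf M x.
Proof. by rewrite /qf bfZl bfZr mulrA expr2. Qed.

Lemma nrmZ n t (x : 'rV[R]_n) : nrm (t *: x) = t ^+ 2 * nrm x.
Proof. exact: qfZ. Qed.

Lemma qf_eig n (M : 'M[R]_n) v a : v *m M = a *: v -> qf M v = a * nrm v.
Proof.
move=> Hv; rewrite /qf bfE Hv nrmE mulr_sumr; apply: eq_bigr => j _.
by rewrite mxE mulrA.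
Qed.


Lemma qf0 n (M : 'M[R]_n) : qf M 0 = 0.
Proof. by rewrite -(scale0r (0 : 'rV[R]_n)) qfZ expr2 !mul0r. Qed.

Lemma S_compact n : compact [set x : 'rV[R]_n | nrm x = 1].
Proof.
have cube := @rV_compact _ n (fun _ => `[(-1 : R), 1]%classic) (fun _ => @segment_compact _ _ _).
apply: (subclosed_compact _ cube).
- have -> : [set x : 'rV[R]_n | nrm x = 1] = (fun x => bf 1%:M x x) @^-1` [set 1].
    by [].
  apply: preimage_closed; last exact: closed_eq.
  by move=> x _; exact: bf_cont.
- move=> v /= Hv i; rewrite /= in_itv /= -ler_norml.
  have H1 : v ord0 i * v ord0 i <= 1.
    rewrite -Hv nrmE (bigD1 i) //= lerDl; apply: sumr_ge0 => j _.
    by rewrite -expr2 sqr_ge0.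
  rewrite -(ler_pXn2r (n:=2)) //; last by rewrite nnegrE.
  by rewrite expr1n real_normK ?num_real // expr2.
Qed.

Lemma RT n (M : 'M[R]_n) : (0 < n)%N -> (forall i j, M i j = M j i) ->
  exists rho, (exists2 c : 'rV[R]_n, c *m M = rho *: c & c != 0) /\
              forall x, qf M x <= rho * nrm x.
Proof.
move=> n0 sM.
set S := [set x : 'rV[R]_n | nrm x = 1].
have S0 : S !=set0.
  pose i0 := Ordinal n0.
  exists (\row_i (i == i0)%:R); rewrite /S /= nrmE (bigD1 i0) //= big1.
    by rewrite !mxE eqxx mulr1 addr0.
  by move=> i /negbTE ne; rewrite !mxE ne mulr0.
have [c cS cmax] := EVT_max_rV S0 (@S_compact n)
   (continuous_subspaceT (@bf_cont n M)).
have {cS}cS : nrm c = 1 by rewrite inE in cS.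
set rho := qf M c.
have Hup : forall x, qf M x <= rho * nrm x.
  move=> x; have [x0|x0] := eqVneq x 0.
    by rewrite x0 qf0 /nrm -/(qf 1%:M 0) qf0 mulr0.
  have px := nrm_gt0 x0.
  set k := (Num.sqrt (nrm x))^-1.
  have k2 : k ^+ 2 * nrm x = 1.
    by rewrite /k exprVn sqr_sqrtr ?nrm_ge0 // mulVf // gt_eqF.
  have : qf M (k *: x) <= rho.
    by apply: cmax; rewrite inE /S /= nrmZ.
  rewrite qfZ => H.
  have -> : qf M x = nrm x * (k ^+ 2 * qf M x).
    by rewrite mulrA [nrm x * _]mulrC k2 mul1r.
  by rewrite mulrC ler_wpM2r // nrm_ge0.
exists rho; split => //; exists c; last first.
  by apply/negP => /eqP c0; move: cS; rewrite c0 /nrm -/(qf 1%:M 0) qf0 => /eqP; rewrite eq_sym oner_eq0.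
set u := c *m M - rho *: c.
suff : nrm u = 0 by move/nrm_eq0/eqP; rewrite subr_eq0 => /eqP.
have key : forall t, t * (nrm u + nrm u) + t ^+ 2 * (qf M u - rho * nrm u) <= 0.
  move=> t; have := Hup (c + t *: u).
  have E1 := @qf_expand n M c u t sM.
  have sym1 : forall i j, (1%:M : 'M[R]_n) i j = 1%:M j i by move=> i j; rewrite !mxE eq_sym.
  have E2 : nrm (c + t *: u) = nrm c + t * (bf 1%:M c u + bf 1%:M c u) + t ^+ 2 * nrm u.
    exact: (@qf_expand n 1%:M c u t sym1).
  rewrite E1 E2 cS.
  have -> : bf M c u = bf 1%:M c u * rho + nrm u.
    rewrite !bfE /nrm bf1 mulr_suml -big_split /=; apply: eq_bigr => j _.
    rewrite mulmx1 /u !mxE.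
    set A := \sum__ _; set B := A - _.
    rewrite -mulrA [B * rho]mulrC mulrA -mulrDl; congr (_ * _).
    by rewrite /B [c ord0 j * rho]mulrC addrC subrK.
  set b := bf 1%:M c u; set s := nrm u; set q := qf M u.
  rewrite addrACA [t * (_ + _ + _)]mulrDr -/rho.
  rewrite [rho * (_ + _)]mulrDr [rho * (_ + _)]mulrDr mulr1.
  rewrite [rho * (t * _)]mulrCA [rho * (b + b)]mulrDr [rho * b]mulrC.
  move=> H; rewrite [rho + (_ + _)]addrA -[_ + _ + t ^+ 2 * q]addrA lerD2l in H.
  by rewrite [rho * (t ^+ 2 * s)]mulrCA in H; rewrite mulrBr addrA subr_le0.
set s := nrm u; set g := qf M u - rho * s.
have s0 : 0 <= s := nrm_ge0 u.
apply/eqP; rewrite eq_le s0 andbT; apply/negP => /negP; rewrite -ltNge => sp.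
have g1 : 0 < `|g| + 1 by rewrite ltr_pwDr ?ltr01.
set t := s / (`|g| + 1).
have tp : 0 < t by rewrite divr_gt0.
have tg : t * (`|g| + 1) = s by rewrite /t divfK // gt_eqF.
have := key t; rewrite expr2 -mulrA -mulrDr pmulr_rle0 //.
have : - s <= t * g.
  rewrite -tg; apply: le_trans (_ : - (t * `|g|) <= _).
    rewrite lerN2; apply: ler_wpM2l; [exact: ltW | by rewrite lerDl ler01].
  rewrite -mulrN; apply: ler_wpM2l; [exact: ltW | by rewrite lerNl -normrN ler_norm].
move=> H1 H2.
have : s + s + - s <= 0 by apply: le_trans H2; rewrite lerD2l.
by rewrite addrK leNgt sp.
Qed.


Lemma lmaxP n (M : 'M[R]_n) : (0 < n)%N -> (forall i j, M i j = M j i) ->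
  (exists2 c : 'rV[R]_n, c *m M = lambda_max M *: c & c != 0) /\
  forall x, qf M x <= lambda_max M * nrm x.
Proof.
move=> n0 sM; have [rho [[c cE c0] Hup]] := RT n0 sM.
have ub : ubound [set a | eigenvalue M a] rho.
  move=> a /eigenvalueP [v vE v0].
  have := Hup v; rewrite (qf_eig vE) ler_pM2r //; exact: nrm_gt0.
have ne : [set a | eigenvalue M a] rho by apply/eigenvalueP; exists c.
have -> : lambda_max M = rho.
  apply/eqP; rewrite eq_le; apply/andP; split.
    by apply: ge_sup => //; exists rho.
  by apply: sup_upper_bound => //; split; [exists rho | exists rho].
by split => //; exists c.
Qed.

End Ray.

Section Graph.
Variable R : realType.
Variable alpha : R.
Hypothesis a0 : 0 <= alpha.
Hypothesis a1 : alpha <= 1.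

Lemma shuf (a b c d : R) : a * (b * c) * d = c * (b * (a * d)).
Proof. by rewrite [b * c]mulrC mulrCA -!mulrA [a * (b * d)]mulrCA. Qed.

Definition w (a b : R) := alpha * (a * a) + (1 - alpha) * (a * b).

Lemma card_sum n (e : rel 'I_n) i :
  (#|[set j | e i j]|)%:R = \sum_j ((e i j)%:R : R).
Proof.
rewrite -sumr_const big_mkcond /=; apply: eq_bigr => j _.
by rewrite /mkset /in_mem /mem /= /in_set asboolb; case: (e i j).
Qed.

Lemma Aent n (e : rel 'I_n) i j : A_alpha alpha e i j =
  alpha * ((#|[set k | e i k]|)%:R *+ (i == j)) + (1 - alpha) * (e i j)%:R.
Proof. by rewrite /A_alpha /deg_mx /adj_mx !mxE. Qed.

Lemma Asym n (e : rel 'I_n) : symmetric e -> forall i j,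
  A_alpha alpha e i j = A_alpha alpha e j i.
Proof.
move=> se i j; rewrite !Aent eq_sym; case: (eqVneq j i) => [->|_] //.
by rewrite se.
Qed.

Lemma qfA n (e : rel 'I_n) (x : 'rV[R]_n) :
  qf (A_alpha alpha e) x =
  \sum_i \sum_j (e i j)%:R * w (x ord0 i) (x ord0 j).
Proof.
rewrite /qf /bf; apply: eq_bigr => i _.
under eq_bigr do rewrite Aent mulrDr mulrDl.
rewrite big_split /= (bigD1 i) //= big1 ?addr0; last first.
  by move=> j ji; rewrite eq_sym (negbTE ji) mulr0n mulr0 mulr0 mul0r.
rewrite eqxx mulr1n /w.
rewrite [RHS](eq_bigr (fun j => (e i j)%:R * (alpha * (x ord0 i * x ord0 i)) +
   (e i j)%:R * ((1 - alpha) * (x ord0 i * x ord0 j)))); last by move=> j _; rewrite mulrDr.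
rewrite big_split /=; congr (_ + _).
  by rewrite -mulr_suml -card_sum shuf.
by apply: eq_bigr => j _; rewrite shuf.
Qed.


Lemma ab_le (a b : R) : a * b <= a * a + b * b.
Proof.
have [ab0|ab0] := leP (a * b) 0.
  by apply: le_trans ab0 _; apply: addr_ge0; rewrite -expr2 sqr_ge0.
have : 0 <= (a - b) ^+ 2 + a * b by rewrite addr_ge0 ?sqr_ge0 ?ltW.
rewrite sqrrB -!expr2 mulr2n.
rewrite -[_ - _ + b ^+ 2]addrA [- _ + _]addrC addrA [_ + - _ + _]addrC.
by rewrite addrC opprD addrA subrK subr_ge0.
Qed.

Lemma w_le a b : w a b <= a * a + b * b.
Proof.
rewrite /w; have -> : a * a + b * b = alpha * (a * a + b * b) + (1 - alpha) * (a * a + b * b).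
  by rewrite -mulrDl [alpha + _]addrC subrK mul1r.
apply: lerD; apply: ler_wpM2l => //.
- by rewrite lerDl -expr2 sqr_ge0.
- by rewrite subr_ge0.
- exact: ab_le.
Qed.

Lemma qfA_le n (e : rel 'I_n) x :
  qf (A_alpha alpha e) x <= n%:R * nrm x + n%:R * nrm x.
Proof.
rewrite qfA; apply: le_trans (_ : _ <= \sum_(i < n) \sum_(j < n)
   (x ord0 i * x ord0 i + x ord0 j * x ord0 j)) _.
  apply: ler_sum => i _; apply: ler_sum => j _.
  case: (e i j); first by rewrite mul1r w_le.
  by rewrite mul0r addr_ge0 // -expr2 sqr_ge0.
rewrite le_eqVlt; apply/orP; left; apply/eqP.
under eq_bigr do rewrite big_split /=.
rewrite big_split /= !mulr_natl -nrmE; congr (_ + _).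
  by rewrite nrmE -sumrMnl; apply: eq_bigr => i _; rewrite sumr_const card_ord.
by rewrite sumr_const card_ord.
Qed.

Lemma w11 : w 1 1 = 1.
Proof. by rewrite /w !mulr1 addrC subrK. Qed.

Lemma lamP n (e : rel 'I_n) : (0 < n)%N -> symmetric e ->
  (exists2 c : 'rV[R]_n, c *m A_alpha alpha e = lam alpha e *: c & c != 0) /\
  forall x, qf (A_alpha alpha e) x <= lam alpha e * nrm x.
Proof. by move=> n0 se; apply: lmaxP => //; apply: Asym. Qed.

Lemma lam_ge0 n (e : rel 'I_n) : (0 < n)%N -> symmetric e -> 0 <= lam alpha e.
Proof.
move=> n0 se; have [_ H] := lamP n0 se.
have := H (const_mx 1); rewrite qfA nrmE.
under eq_bigr do under eq_bigr do rewrite !mxE w11 mulr1.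
under [X in _ <= _ * X]eq_bigr do rewrite !mxE mulr1.
rewrite sumr_const card_ord => H2.
have : 0 <= lam alpha e * n%:R.
  apply: le_trans H2; apply: sumr_ge0 => i _; apply: sumr_ge0 => j _.
  by rewrite ler0n.
by rewrite pmulr_lge0 // ltr0n.
Qed.

Lemma lam_le n (e : rel 'I_n) : (0 < n)%N -> symmetric e ->
  lam alpha e <= n%:R + n%:R.
Proof.
move=> n0 se; have [[c cE c0] _] := lamP n0 se.
have := qfA_le e c; rewrite (qf_eig cE) -mulrDl ler_pM2r //; exact: nrm_gt0.
Qed.

End Graph.

Section Blow.
Variable R : realType.

Definition md n (n0 : (0 < n)%N) (k : nat) : 'I_n := Ordinal (ltn_pmod k n0).

Lemma RL n (n0 : (0 < n)%N) q (F : 'I_n -> R) :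
  \sum_(0 <= k < (q * n)%N) F (md n0 k) = q%:R * \sum_(i < n) F i.
Proof.
elim: q => [|q IH]; first by rewrite mul0n big_geq // mul0r.
rewrite mulSnr (big_cat_nat (leq0n _) (leq_addr _ _)) /= IH.
rewrite -{1}(add0n (q * n)%N) big_addn addKn big_mkord.
rewrite -[q.+1]addn1 natrD mulrDl mul1r; congr (_ + _).
apply: eq_bigr => i _; congr (F _); apply: val_inj => /=.
by rewrite addnC modnMDl modn_small.
Qed.

Lemma RLm n m (n0 : (0 < n)%N) q (F : 'I_n -> R) : (q * n <= m)%N ->
  \sum_(y < m) ((y < q * n)%N)%:R * F (md n0 y) = q%:R * \sum_(i < n) F i.
Proof.
move=> qm.
rewrite -(big_mkord xpredT (fun k => ((k < q * n)%N)%:R * F (md n0 k))).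
rewrite (big_cat_nat (leq0n _) qm) /= [X in _ + X]big_nat_cond [X in _ + X]big1 ?addr0;
  last by move=> k /andP[/andP[qk _] _]; rewrite ltnNge qk mul0r.
rewrite -RL big_nat_cond [RHS]big_nat_cond; apply: eq_bigr => k /andP[/andP[_ ->] _].
by rewrite mul1r.
Qed.

End Blow.

Section Lift.
Variable R : realType.
Variable alpha : R.
Hypothesis a0 : 0 <= alpha.
Hypothesis a1 : alpha <= 1.

Definition liftv n m (n0 : (0 < n)%N) q (c : 'rV[R]_n) : 'rV[R]_m :=
  \row_(y < m) (((y < q * n)%N)%:R * c ord0 (md n0 y)).

Lemma nrm_lift n m (n0 : (0 < n)%N) q (c : 'rV[R]_n) : (q * n <= m)%N ->
  nrm (liftv m n0 q c) = q%:R * nrm c.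
Proof.
move=> qm; rewrite !nrmE -(RLm n0 (fun i => c ord0 i * c ord0 i) qm).
apply: eq_bigr => y _; rewrite mxE.
by case: (y < q * n)%N; rewrite ?mul1r ?mul0r.
Qed.

Lemma qf_lift n m (e : rel 'I_n) (n0 : (0 < n)%N) q (c : 'rV[R]_n) : (q * n <= m)%N ->
  q%:R * (q%:R * qf (A_alpha alpha e) c) <=
  qf (A_alpha alpha (fun y z : 'I_m => e (md n0 y) (md n0 z))) (liftv m n0 q c).
Proof.
move=> qm.
have E : \sum_(y < m) ((y < q * n)%N)%:R * \sum_(z < m) ((z < q * n)%N)%:R *
    ((e (md n0 y) (md n0 z))%:R * w alpha (c ord0 (md n0 y)) (c ord0 (md n0 z)))
    = q%:R * (q%:R * qf (A_alpha alpha e) c).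
  under eq_bigr => y _ do rewrite (RLm n0 (fun j => (e (md n0 y) j)%:R *
        w alpha (c ord0 (md n0 y)) (c ord0 j)) qm).
  rewrite (RLm n0 (fun i => q%:R * \sum_j (e i j)%:R * w alpha (c ord0 i) (c ord0 j)) qm).
  by rewrite qfA; congr (_ * _); rewrite [RHS]mulr_sumr.
rewrite -E qfA; apply: ler_sum => y _; rewrite mulr_sumr; apply: ler_sum => z _.
rewrite !mxE.
case: (y < q * n)%N; case: (z < q * n)%N => /=.
- by rewrite !mul1r.
- rewrite !mul1r !mul0r /w !(mulr0, addr0); apply: mulr_ge0; first by rewrite ler0n.
  by apply: mulr_ge0 => //; rewrite -expr2 sqr_ge0.
- by rewrite !mul0r /w !(mul0r, mulr0, addr0).
- by rewrite !mul0r /w !(mul0r, mulr0, addr0).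
Qed.

End Lift.

Section Fam.
Variable R : realType.
Variable alpha : R.
Hypothesis a0 : 0 <= alpha.
Hypothesis a1 : alpha <= 1.
Variable F : graph_family.
Hypothesis hF : hereditary_family F.
Hypothesis mF : multiplicative_family F.

Lemma f_lt n m (n0 : (0 < n)%N) (y : 'I_m) : ((y %% n) * m + y %/ n < n * m)%N.
Proof.
have h1 := ltn_pmod y n0.
have h2 : (y %/ n < m)%N := leq_ltn_trans (leq_div y n) (ltn_ord y).
move: (y %% n)%N (y %/ n)%N h1 h2 => a b h1 h2.
have : (a.+1 * m <= n * m)%N by rewrite leq_mul2r h1 orbT.
rewrite mulSn; lia.
Qed.

Definition fe n m (n0 : (0 < n)%N) (y : 'I_m) : 'I_(n * m) := Ordinal (f_lt n0 y).

Lemma proj_fe n m (n0 : (0 < n)%N) (y : 'I_m) : blow_proj (fe n0 y) = md n0 y.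
Proof.
apply: val_inj => /=.
have h2 : (y %/ n < m)%N := leq_ltn_trans (leq_div y n) (ltn_ord y).
by rewrite divnMDl ?(leq_ltn_trans _ h2) // (divn_small h2) addn0.
Qed.

Lemma fe_inj n m (n0 : (0 < n)%N) : injective (@fe n m n0).
Proof.
move=> y z /(congr1 val) /= E.
have hy : (y %/ n < m)%N := leq_ltn_trans (leq_div y n) (ltn_ord y).
have hz : (z %/ n < m)%N := leq_ltn_trans (leq_div z n) (ltn_ord z).
have m0 : (0 < m)%N := leq_ltn_trans (leq0n _) (ltn_ord y).
have E1 := congr1 (fun k => k %/ m)%N E.
have E2 := congr1 (fun k => k %% m)%N E.
rewrite /= !divnMDl // (divn_small hy) (divn_small hz) !addn0 in E1.
rewrite /= !modnMDl (modn_small hy) (modn_small hz) in E2.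
apply: val_inj; rewrite /= (divn_eq y n) (divn_eq z n) E1 E2 //.
Qed.

Lemma BL n m q (e : rel 'I_n) : (0 < n)%N -> (0 < q)%N -> (q * n <= m)%N ->
  inG F e -> exists H : rel 'I_m, inG F H /\ q%:R * lam alpha e <= lam alpha H.
Proof.
move=> n0 q0 qm He.
have m0 : (0 < m)%N by apply: leq_trans qm; rewrite muln_gt0 q0.
have He' := mF m0 He.
have HH := hF (@fe_inj n m n0) He'.
set H := (fun i j => _) in HH.
have HE : H = fun y z : 'I_m => e (md n0 y) (md n0 z).
  by apply/funext => y; apply/funext => z; rewrite /H /blowup !proj_fe.
rewrite HE in HH; exists (fun y z : 'I_m => e (md n0 y) (md n0 z)); split => //.
have [[_ se] _] := He; have [[_ sH] _] := HH.
have [[c cE c0] _] := lamP alpha n0 se.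
have [_ upH] := lamP alpha m0 sH.
have L := qf_lift a0 e n0 c qm.
have U := upH (liftv m n0 q c); rewrite nrm_lift // in U.
rewrite (qf_eig cE) in L.
have pc := nrm_gt0 c0.
have qp : 0 < (q%:R : R) by rewrite ltr0n.
rewrite -(ler_pM2r (mulr_gt0 qp pc)) mulrACA -mulrA.
exact: le_trans L U.
Qed.

End Fam.

Section Main.
Variable R : realType.
Variable alpha : R.
Hypothesis a0 : 0 <= alpha.
Hypothesis a1 : alpha <= 1.
Variable F : graph_family.
Hypothesis hF : hereditary_family F.
Hypothesis mF : multiplicative_family F.
Hypothesis hne : forall n : nat, exists e : rel 'I_n, inG F e.

Definition Sn n := [set lam alpha e | e in [set e : rel 'I_n | inG F e]].

Lemma Sn_sup n : (0 < n)%N -> has_sup (Sn n).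
Proof.
move=> n0; split.
  by have [e He] := hne n; exists (lam alpha e); exists e.
exists (n%:R + n%:R) => _ [e He <-].
by apply: lam_le => //; case: He => [[]].
Qed.

Lemma lam_le_lamF n (e : rel 'I_n) : (0 < n)%N -> inG F e ->
  lam alpha e <= lamF F alpha n.
Proof. by move=> n0 He; rewrite /lamF; apply: (sup_upper_bound (Sn_sup n0)); exists e. Qed.

Lemma lamF_ge0 n : (0 < n)%N -> 0 <= lamF F alpha n.
Proof.
move=> n0; have [e He] := hne n; apply: le_trans (lam_le_lamF n0 He).
by apply: lam_ge0 => //; case: He => [[]].
Qed.

Lemma lamF_le n : (0 < n)%N -> lamF F alpha n <= n%:R + n%:R.
Proof.
move=> n0; rewrite /lamF; apply: ge_sup; first by case: (Sn_sup n0).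
move=> _ [e He <-]; by apply: lam_le => //; case: He => [[]].
Qed.

Lemma lamF_mul n m q : (0 < n)%N -> (0 < q)%N -> (q * n <= m)%N ->
  q%:R * lamF F alpha n <= lamF F alpha m.
Proof.
move=> n0 q0 qm.
have m0 : (0 < m)%N by apply: leq_trans qm; rewrite muln_gt0 q0.
have qp : 0 < (q%:R : R) by rewrite ltr0n.
rewrite mulrC -ler_pdivlMr // /lamF; apply: ge_sup; first by case: (Sn_sup n0).
move=> _ [e He <-]; rewrite ler_pdivlMr // mulrC.
have [H [HH le]] := BL a0 a1 hF mF n0 q0 qm He.
exact: le_trans le (lam_le_lamF m0 HH).
Qed.

Definition u n := lamF F alpha n / n%:R.

Lemma u_ge0 n : (0 < n)%N -> 0 <= u n.
Proof. by move=> n0; rewrite divr_ge0 ?lamF_ge0 ?ler0n. Qed.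

Lemma u_le n : (0 < n)%N -> u n <= 2.
Proof.
move=> n0; rewrite ler_pdivrMr ?ltr0n //.
by apply: le_trans (lamF_le n0) _; rewrite -mulr2n mulr_natl.
Qed.

Lemma u_mono n m : (0 < n)%N -> (n <= m)%N ->
  u n - (n%:R + n%:R) / m%:R <= u m.
Proof.
move=> n0 nm.
have m0 : (0 < m)%N := leq_trans n0 nm.
set q := (m %/ n)%N.
have q0 : (0 < q)%N by rewrite divn_gt0.
have qm : (q * n <= m)%N by rewrite leq_trunc_div.
have mq : (m - n <= q * n)%N.
  have := divn_eq m n; have := ltn_pmod m n0; rewrite -/q; lia.
have mp : 0 < (m%:R : R) by rewrite ltr0n.
have np : 0 < (n%:R : R) by rewrite ltr0n.
have H1 : u n * (m - n)%:R <= lamF F alpha m.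
  apply: le_trans (lamF_mul n0 q0 qm).
  have -> : q%:R * lamF F alpha n = u n * (q * n)%:R.
    by rewrite natrM mulrCA /u divfK ?gt_eqF // mulrC.
  by apply: ler_wpM2l; [exact: u_ge0 | rewrite ler_nat].
rewrite /u ler_pdivlMr // -/(u n) mulrBl divfK ?gt_eqF //.
apply: le_trans H1; rewrite natrB // mulrBr lerB //.
have := ler_wpM2r (ler0n R n) (u_le n0).
by rewrite mulr_natl mulr2n.
Qed.


Definition U := [set u k | k in [set k : nat | (0 < k)%N]].

Lemma U_sup : has_sup U.
Proof.
split; first by exists (u 1); exists 1%N.
by exists 2 => _ [k k0 <-]; apply: u_le.
Qed.

Lemma u_cvg : u @ \oo --> sup U.
Proof.
apply/cvgrPdist_le => eps ep.
have e2 : 0 < eps / 2 by rewrite divr_gt0.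
have [_ [n1 n1p <-] hn1] := sup_adherent e2 U_sup.
rewrite /= in n1p.
set x := (n1%:R + n1%:R) / (eps / 2).
set N := (Num.trunc x).+1.
have xN : x < N%:R by exact: truncnS_gt.
exists (maxn N n1) => // m /=; rewrite geq_max => /andP[Nm n1m].
have m0 : (0 < m)%N := leq_trans n1p n1m.
have mp : 0 < (m%:R : R) by rewrite ltr0n.
have um : u m <= sup U by apply: (sup_upper_bound U_sup); exists m.
have h1 : sup U - u n1 < eps / 2 by rewrite ltrBlDr addrC -ltrBlDr.
have h2 : u n1 - u m <= (n1%:R + n1%:R) / m%:R.
  by rewrite lerBlDl addrC -lerBlDl; apply: u_mono.
have h3 : (n1%:R + n1%:R) / m%:R < eps / 2.
  rewrite ltr_pdivrMr // mulrC -ltr_pdivrMr //; apply: lt_le_trans xN _.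
  by rewrite ler_nat.
rewrite ger0_norm ?subr_ge0 //.
have -> : sup U - u m = (sup U - u n1) + (u n1 - u m) by rewrite addrA subrK.
rewrite [eps]splitr; apply: lerD; first exact: ltW.
by apply: le_trans h2 _; apply: ltW.
Qed.

End Main.

Unset Implicit Arguments. Set Strict Implicit.
Theorem lemma5p7 (R : realType) (F : graph_family) (r : nat) (alpha : R) :
  hereditary_family F -> multiplicative_family F ->
  (forall n : nat, exists e : rel 'I_n, inG F e) ->
  (2 <= r)%N -> 0 <= alpha -> alpha <= 1 - r%:R^-1 ->
  (exists N : nat, forall n : nat, (N <= n)%N ->
     (1 - r%:R^-1) * n%:R - (1 - r%:R^-1) < lamF F alpha n) ->
  cvgn (fun n : nat => lamF F alpha n / n%:R) /\
  (forall (n : nat) (e : rel 'I_n), (1 <= n)%N -> inG F e ->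
     lam alpha e <= pi_alpha F alpha * n%:R).
Proof.
move=> hF mF hne r2 a0 ar _.
have a1 : alpha <= 1.
  by apply: le_trans ar _; rewrite lerBlDr lerDl invr_ge0 ler0n.
have cv := u_cvg a0 a1 hF mF hne.
split; first exact: cvgP cv.
move=> n e n1 He.
have -> : pi_alpha F alpha = sup (U alpha F) by exact: (cvg_lim (@Rhausdorff R) cv).
apply: le_trans (lam_le_lamF a0 a1 hne n1 He) _.
have np : 0 < (n%:R : R) by rewrite ltr0n.
rewrite -ler_pdivrMr //.
by apply: (sup_upper_bound (U_sup a0 a1 hne)); exists n.
Qed.
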